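(* Let $T$ be a rooted tree whose leaves are the keys $[n]=\{1,\dots,n\}$, and for each node $v$ of $T$ let $R_v$ be the set of leaves in the subtree of $v$. Let $p=(p_1,\dots,p_n)\in[0,1]^n$ with $\sum_i p_i$ an integer. Let $S$ be the random output of the hierarchy summarization procedure applied to $T$ and $p$. Then the distribution of $S$ is VarOpt for $p$, and for every node $v$ of $T$, with probability one, $|S\cap R_v|\in\{\lfloor p(R_v)\rfloor,\lceil p(R_v)\rceil\}$, where $p(R)=\sum_{i\in R}p_i$. In particular the maximum range discrepancy over the ranges $\{R_v\}$ is less than $1$.
   Context: Pair-Aggregate$(p,i,j)$, for indices $i\ne j$ with $0<p_i,p_j<1$, modifies only entries $i,j$ of the current vector $p$: if $p_i+p_j<1$, then with probability $p_i/(p_i+p_j)$ set $(p_i,p_j)\leftarrow(p_i+p_j,0)$ and otherwise set $(p_i,p_j)\leftarrow(0,p_i+p_j)$; if $p_i+p_j\ge 1$, then with probability $(1-p_j)/(2-p_i-p_j)$ set $(p_i,p_j)\leftarrow(1,p_i+p_j-1)$ and otherwise set $(p_i,p_j)\leftarrow(p_i+p_j-1,1)$ (independent fresh randomness each call). The hierarchy summarization procedure: starting from the vector $p$, as long as there are at least two indices whose current value lies in $(0,1)$, choose a pair $i\ne j$ of such indices whose lowest common ancestor $\mathrm{LCA}(i,j)$ in $T$ is lowest, i.e. there is no other pair of indices with current values in $(0,1)$ whose LCA is a proper descendant of $\mathrm{LCA}(i,j)$ (ties broken arbitrarily), and apply Pair-Aggregate to it; at termination output $S=\{i: p_i=1\}$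 for the final vector. A distribution over subsets $S\subseteq[n]$ is VarOpt for $p$ if $\Pr[i\in S]=p_i$ for all $i$, $|S|=\sum_ip_i$ with probability one, and for every $J\subseteq[n]$, $\Pr[J\subseteq S]\le\prod_{i\in J}p_i$ and $\Pr[J\cap S=\emptyset]\le\prod_{i\in J}(1-p_i)$. The maximum range discrepancy over a family of ranges $\mathcal{R}$ is $\max_{S}\max_{R\in\mathcal{R}}\big||S\cap R|-p(R)\big|$ over $S$ in the support. *)

(* Defs.v *)
From HB Require Import structures.
From mathcomp Require Import all_boot all_order all_algebra.
From mathcomp Require Import reals.
From Stdlib Require List.
Set Implicit Arguments. Unset Strict Implicit. Unset Printing Implicit Defensive.
Import Order.TTheory GRing.Theory Num.Theory.
Local Open Scope ring_scope.

Inductive tree (n : nat) : Type :=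
| Leaf of 'I_n
| Node of seq (tree n).
Arguments Leaf {n}.
Arguments Node {n}.

Fixpoint leaves {n} (t : tree n) : seq 'I_n :=
  match t with
  | Leaf i => [:: i]
  | Node ts => flatten (map leaves ts)
  end.

Fixpoint nodes {n} (t : tree n) : seq (tree n) :=
  t :: match t with
       | Leaf _ => [::]
       | Node ts => flatten (map nodes ts)
       end.

(* every internal node has at least one child (so leaves are exactly keys) *)
Fixpoint no_empty_node {n} (t : tree n) : Prop :=
  match t with
  | Leaf _ => True
  | Node ts => ts <> [::] /\ (fix all_ok (l : seq (tree n)) : Prop :=
                 match l with [::] => True | u :: l' => no_empty_node u /\ all_ok l' end) ts
  end.

Definition keyed_tree {n} (T : tree n) : Prop :=
  no_empty_node T /\ perm_eq (leaves T) (enum 'I_n).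

Definition range_of {n} (v : tree n) : {set 'I_n} := [set i | i \in leaves v].

Definition descendant {n} (u v : tree n) : Prop := List.In u (nodes v).
Definition proper_descendant {n} (u v : tree n) : Prop := descendant u v /\ u <> v.

Definition is_lca {n} (T : tree n) (i j : 'I_n) (u : tree n) : Prop :=
  descendant u T /\ i \in leaves u /\ j \in leaves u /\
  forall w, proper_descendant w u -> ~ (i \in leaves w /\ j \in leaves w).

Section Procedure.
Variable R : realType.
Variable n : nat.
Variable T : tree n.

Definition fractional (p : 'I_n -> R) (i : 'I_n) : Prop := 0 < p i < 1.

Definition upd (p : 'I_n -> R) (i j : 'I_n) (a b : R) : 'I_n -> R :=
  fun k => if k == i then a else if k == j then b else p k.

(* Pair-Aggregate(p,i,j): (q, p1, p2) meaning p1 with probability q and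
   p2 with probability 1 - q. *)
Definition pair_aggregate (p : 'I_n -> R) (i j : 'I_n) : R * ('I_n -> R) * ('I_n -> R) :=
  let s := p i + p j in
  if s < 1 then (p i / s, upd p i j s 0, upd p i j 0 s)
  else ((1 - p j) / (2 - s), upd p i j 1 (s - 1), upd p i j (s - 1) 1).

Definition lowest_pair (p : 'I_n -> R) (i j : 'I_n) : Prop :=
  i != j /\ fractional p i /\ fractional p j /\
  exists u, is_lca T i j u /\
    forall a b w, a != b -> fractional p a -> fractional p b ->
      is_lca T a b w -> ~ proper_descendant w u.

Definition dirac (S0 : {set 'I_n}) : {set 'I_n} -> R :=
  fun S => if S == S0 then 1 else 0.
Definition mix (q : R) (D1 D2 : {set 'I_n} -> R) : {set 'I_n} -> R :=
  fun S => q * D1 S + (1 - q) * D2 S.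

(* outcome p D : D is the distribution of the output S of the hierarchy
   summarization procedure started from the vector p, for some resolution of
   the (arbitrary) tie-breaking. *)
Inductive outcome : ('I_n -> R) -> ({set 'I_n} -> R) -> Prop :=
| outcome_stop p :
    (forall i j, i != j -> fractional p i -> fractional p j -> False) ->
    outcome p (dirac [set i | p i == 1])
| outcome_step p i j D1 D2 :
    lowest_pair p i j ->
    outcome (pair_aggregate p i j).1.2 D1 ->
    outcome (pair_aggregate p i j).2 D2 ->
    outcome p (mix (pair_aggregate p i j).1.1 D1 D2).

End Procedure.

Definition Pr {R : realType} {n} (D : {set 'I_n} -> R) (E : pred {set 'I_n}) : R :=
  \sum_(S | E S) D S.

Definition is_distribution {R : realType} {n} (D : {set 'I_n} -> R) : Prop :=
  (forall S, 0 <= D S) /\ \sum_S D S = 1.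

Definition pmass {R : realType} {n} (p : 'I_n -> R) (A : {set 'I_n}) : R :=
  \sum_(i in A) p i.

Definition VarOpt {R : realType} {n} (p : 'I_n -> R) (D : {set 'I_n} -> R) : Prop :=
  is_distribution D /\
  (forall i, Pr D (fun S => i \in S) = p i) /\
  (forall S, 0 < D S -> (#|S|%:R : R) = \sum_i p i) /\
  (forall J : {set 'I_n}, Pr D (fun S => J \subset S) <= \prod_(i in J) p i) /\
  (forall J : {set 'I_n}, Pr D (fun S => [disjoint J & S]) <= \prod_(i in J) (1 - p i)).

Definition max_range_discrepancy {R : realType} {n} (T : tree n)
    (p : 'I_n -> R) (D : {set 'I_n} -> R) : R :=
  \big[Num.max/0]_(S | 0 < D S)
    \big[Num.max/0]_(v <- nodes T) `|(#|S :&: range_of v|%:R : R) - pmass p (range_of v)|.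

(* Main.v *)
Require Import Defs.
From HB Require Import structures.
From mathcomp Require Import all_boot all_order all_algebra.
From mathcomp Require Import reals.
From Stdlib Require Import Classical.
Import Order.TTheory GRing.Theory Num.Theory.
Set Implicit Arguments. Unset Strict Implicit.


Definition tree_ind' (n : nat) (P : tree n -> Prop)
  (HL : forall i, P (Leaf i))
  (HN : forall ts, (forall t, List.In t ts -> P t) -> P (Node ts)) :
  forall t, P t :=
  fix F t := match t with
  | Leaf i => HL i
  | Node ts => HN ts ((fix G (l : seq (tree n)) : forall t, List.In t l -> P t :=
        match l with
        | [::] => fun t (H : List.In t [::]) => match H with end
        | u :: l' => fun t H => match H with
                     | or_introl E => eq_ind u P (F u) t E
                     | or_intror H' => G l' t H'
                     end
        end) ts)
  end.

Lemma In_flatten (A B : Type) (f : A -> seq B) (ts : seq A) (x : B) :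
  List.In x (flatten (map f ts)) <-> exists t, List.In t ts /\ List.In x (f t).
Proof.
elim: ts => [|s ts IH] /=; first by split=> // -[t []].
have Hc : forall (l1 l2 : seq B), List.In x (l1 ++ l2) <-> List.In x l1 \/ List.In x l2.
  by move=> l1 l2; elim: l1 => [|a l1 IH1] /=; [tauto|rewrite IH1; tauto].
rewrite Hc IH; split.
- by case=> [H|[t [H1 H2]]]; [exists s; auto | exists t; auto].
- by case=> t [[<-|H1] H2]; [left|right; exists t].
Qed.

Lemma desc_refl n (v : tree n) : descendant v v.
Proof. by case: v => [i|ts]; left. Qed.

Lemma desc_node n (u : tree n) ts : descendant u (Node ts) ->
  u = Node ts \/ exists t, List.In t ts /\ descendant u t.
Proof.
rewrite /descendant /= => -[->|H]; [by left|right].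
by move/In_flatten: H.
Qed.

Lemma desc_child n (u t : tree n) ts : List.In t ts -> descendant u t ->
  descendant u (Node ts).
Proof. by move=> H1 H2; rewrite /descendant /=; right; apply/In_flatten; exists t. Qed.

Lemma desc_trans n (a b c : tree n) : descendant a b -> descendant b c -> descendant a c.
Proof.
move=> Hab; elim/tree_ind': c => [i|ts IH].
  by rewrite /descendant /= => -[E|[]]; subst.
move/desc_node => [E|[t [Ht Hbt]]]; first by subst.
exact: desc_child Ht (IH t Ht Hbt).
Qed.

Lemma leaves_desc n (u v : tree n) i : descendant u v -> i \in leaves u -> i \in leaves v.
Proof.
elim/tree_ind': v => [j|ts IH].
  by rewrite /descendant /= => -[E|[]]; subst.
move/desc_node => [E|[t [Ht Hut]]] Hi; first by subst.
have := IH t Ht Hut Hi.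
rewrite /=; elim: ts Ht {IH} => [|s ts IH2] //= [->|Ht] H; rewrite mem_cat ?H //.
by rewrite IH2 ?orbT.
Qed.

Lemma size_nodes_child n (t : tree n) ts : List.In t ts ->
  (size (nodes t) < size (nodes (Node ts)))%N.
Proof.
move=> Ht; rewrite /= ltnS.
elim: ts Ht => [|s ts IH] //= [->|Ht]; rewrite size_cat ?leq_addr //.
by apply: leq_trans (IH Ht) _; rewrite leq_addl.
Qed.

Lemma desc_size n (u v : tree n) : descendant u v ->
  u = v \/ (size (nodes u) < size (nodes v))%N.
Proof.
elim/tree_ind': v => [i|ts IH].
  by rewrite /descendant /= => -[<-|[]]; left.
move/desc_node => [->|[t [Ht Hut]]]; [by left|right].
case: (IH t Ht Hut) => [->|H]; first exact: size_nodes_child.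
by apply: (ltn_trans H); apply: size_nodes_child.
Qed.

Lemma desc_antisym n (u v : tree n) : descendant u v -> descendant v u -> u = v.
Proof.
move=> /desc_size [//|H1] /desc_size [//|H2].
by have := ltn_trans H1 H2; rewrite ltnn.
Qed.

Lemma uniq_child n (t : tree n) ts : uniq (flatten (map leaves ts)) -> List.In t ts ->
  uniq (leaves t).
Proof.
elim: ts => [|s ts IH] //= Hu [E|Ht]; move: Hu; rewrite cat_uniq.
  by subst; case/and3P.
by case/and3P => _ _ /IH; apply.
Qed.

Lemma uniq_two_children n (t t' : tree n) ts i : uniq (flatten (map leaves ts)) ->
  List.In t ts -> List.In t' ts -> t <> t' -> i \in leaves t -> i \in leaves t' -> False.
Proof.
have Hin : forall (l : seq (tree n)) t, List.In t l -> i \in leaves t -> i \in flatten (map leaves l).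
  move=> l u; elim: l => [|s l IH] //= [->|H] Hi; rewrite mem_cat ?Hi //.
  by rewrite IH ?orbT.
elim: ts => [|s ts IH] //= Hu; move: (Hu); rewrite cat_uniq => /and3P [_ Hd Hu2].
move=> [E|Ht] [E'|Ht'] Hne Hi Hi'.
- by apply: Hne; rewrite -E -E'.
- subst s; move/hasPn: Hd => /(_ i (Hin _ _ Ht' Hi')) /=; by rewrite Hi.
- subst s; move/hasPn: Hd => /(_ i (Hin _ _ Ht Hi)) /=; by rewrite Hi'.
- exact: IH Hu2 Ht Ht' Hne Hi Hi'.
Qed.

Lemma desc_comparable n (v0 u w : tree n) i : uniq (leaves v0) ->
  descendant u v0 -> descendant w v0 -> i \in leaves u -> i \in leaves w ->
  descendant u w \/ descendant w u.
Proof.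
elim/tree_ind': v0 u w => [j|ts IH] u w.
  by move=> _; rewrite /descendant /= => -[<-|[]] [<-|[]]; left; left.
move=> Hu /desc_node [->|[t [Ht Hut]]].
  by move=> Hw; right.
move/desc_node => [->|[t' [Ht' Hwt']]]; first by left; apply: desc_child Ht Hut.
move=> Hi Hi'.
case: (classic (t = t')) => [E|Hne].
  subst t'; apply: (IH t Ht u w) => //; exact: (uniq_child Hu Ht).
exfalso; exact: uniq_two_children Hu Ht Ht' Hne (leaves_desc Hut Hi) (leaves_desc Hwt' Hi').
Qed.

Lemma lca_exists_aux n (T : tree n) i j : forall N (u : tree n),
  (size (nodes u) <= N)%N -> descendant u T -> i \in leaves u -> j \in leaves u ->
  exists w, is_lca T i j w.
Proof.
elim=> [|N IH] u Hs Hu Hi Hj.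
  by case: u Hs {Hu Hi Hj}.
case: (classic (exists w, proper_descendant w u /\ i \in leaves w /\ j \in leaves w)).
  move=> [w [[Hwu Hne] [Hiw Hjw]]].
  apply: (IH w) => //; last exact: desc_trans Hwu Hu.
  by case: (desc_size Hwu) => // H; rewrite -ltnS; apply: leq_trans H Hs.
move=> Hno; exists u; split=> //; split=> //; split=> // w Hw [Hiw Hjw].
by apply: Hno; exists w.
Qed.

Lemma lca_exists n (T : tree n) i j : i \in leaves T -> j \in leaves T ->
  exists w, is_lca T i j w.
Proof. by move=> Hi Hj; apply: (lca_exists_aux (leqnn _) (desc_refl T)). Qed.

Lemma lca_below n (T v w : tree n) a b : uniq (leaves T) -> is_lca T a b w ->
  descendant v T -> a \in leaves v -> b \in leaves v -> descendant w v.
Proof.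
move=> Hu [HwT [Haw [Hbw Hmin]]] HvT Hav Hbv.
case: (desc_comparable Hu HwT HvT Haw Hav) => // Hvw.
case: (classic (v = w)) => [->|Hne]; first exact: desc_refl.
by exfalso; apply: (Hmin v).
Qed.

Lemma keyed_mem n (T : tree n) i : keyed_tree T -> i \in leaves T.
Proof. by case=> _ /perm_mem ->; rewrite mem_enum. Qed.

Lemma keyed_uniq n (T : tree n) : keyed_tree T -> uniq (leaves T).
Proof. by case=> _ /perm_uniq ->; apply: enum_uniq. Qed.

From mathcomp Require Import lra.
Local Open Scope ring_scope.

Definition frac01 (R : realType) (x : R) : bool := (0 < x) && (x < 1).

Lemma pa_spec (R : realType) n (p : 'I_n -> R) i j :
  fractional p i -> fractional p j ->
  exists q a1 b1 a2 b2,
  pair_aggregate p i j = (q, upd p i j a1 b1, upd p i j a2 b2) /\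
  0 < q < 1 /\
  a1 + b1 = p i + p j /\ a2 + b2 = p i + p j /\
  q * a1 + (1 - q) * a2 = p i /\ q * b1 + (1 - q) * b2 = p j /\
  0 <= a1 <= 1 /\ 0 <= b1 <= 1 /\ 0 <= a2 <= 1 /\ 0 <= b2 <= 1 /\
  (~~ frac01 a1 \/ ~~ frac01 b1) /\ (~~ frac01 a2 \/ ~~ frac01 b2) /\
  q * (a1 * b1) + (1 - q) * (a2 * b2) <= p i * p j /\
  q * ((1 - a1) * (1 - b1)) + (1 - q) * ((1 - a2) * (1 - b2)) <= (1 - p i) * (1 - p j).
Proof.
rewrite /fractional => /andP [Hi0 Hi1] /andP [Hj0 Hj1].
rewrite /pair_aggregate /frac01.
case: ifP => Hs.
- set s := p i + p j.
  have Hs0 : 0 < s by rewrite /s; lra.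
  have E : p i / s * s = p i by rewrite divfK // gt_eqF.
  exists (p i / s), s, 0, 0, s; split=> //.
  have Hq0 : 0 < p i / s by apply: divr_gt0.
  have Hq1 : p i / s < 1 by rewrite ltr_pdivrMr //; rewrite /s; lra.
  rewrite ?ltxx /=.
  have Es : s = p i + p j by []. clearbody s.
  move: (p i / s) E Hq0 Hq1 => q E Hq0 Hq1.
  do 14?[split]; try lra; try (by left); try (by right); try nra.
- set s := p i + p j.
  have Hs1 : 1 <= s by rewrite /s; move: Hs => /negbT; rewrite -leNgt.
  have Hs0 : 0 < 2 - s by rewrite /s; lra.
  have E : (1 - p j) / (2 - s) * (2 - s) = 1 - p j by rewrite divfK // gt_eqF.
  exists ((1 - p j) / (2 - s)), 1, (s - 1), (s - 1), 1; split=> //.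
  have Hq0 : 0 < (1 - p j) / (2 - s) by apply: divr_gt0; lra.
  have Hq1 : (1 - p j) / (2 - s) < 1 by rewrite ltr_pdivrMr //; rewrite /s; lra.
  rewrite ?ltxx /=.
  have Es : s = p i + p j by []. clearbody s.
  move: ((1 - p j) / (2 - s)) E Hq0 Hq1 => q E Hq0 Hq1.
  do 14?[split]; try lra; try (by left); try (by right); try nra.
  all: rewrite ?ltxx ?andbF; try (by left); try (by right).
Qed.

Lemma upd_i (R : realType) n (p : 'I_n -> R) i j a b : upd p i j a b i = a.
Proof. by rewrite /upd eqxx. Qed.
Lemma upd_j (R : realType) n (p : 'I_n -> R) i j a b : i != j -> upd p i j a b j = b.
Proof. by rewrite /upd eq_sym => /negbTE ->; rewrite eqxx. Qed.
Lemma upd_o (R : realType) n (p : 'I_n -> R) i j a b k : k != i -> k != j -> upd p i j a b k = p k.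
Proof. by rewrite /upd => /negbTE -> /negbTE ->. Qed.

Definition fset_of (R : realType) n (p : 'I_n -> R) : {set 'I_n} := [set k | frac01 (p k)].

Lemma fset_decr (R : realType) n (p : 'I_n -> R) i j a b : i != j ->
  fractional p i -> fractional p j -> (~~ frac01 a \/ ~~ frac01 b) ->
  (#|fset_of (upd p i j a b)| < #|fset_of p|)%N.
Proof.
move=> Hij Hi Hj Hab.
have [m [Hm1 Hm2]] : exists m, m \in fset_of p /\ ~~ frac01 (upd p i j a b m).
  case: Hab => H; [exists i | exists j]; rewrite inE ?upd_i ?upd_j //.
rewrite (cardsD1 m (fset_of p)) Hm1 add1n ltnS; apply: subset_leq_card.
apply/subsetP => k; rewrite !inE.
case: (eqVneq k m) => [->|Hkm]; first by rewrite (negbTE Hm2).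
rewrite /=.
case: (eqVneq k i) => [->|Hki]; first by move=> _; exact: Hi.
case: (eqVneq k j) => [->|Hkj]; first by move=> _; exact: Hj.
by rewrite upd_o.
Qed.

Lemma lowest_exists_aux (R : realType) n (T : tree n) (p : 'I_n -> R) : forall N a b w,
  (size (nodes w) <= N)%N -> a != b -> fractional p a -> fractional p b -> is_lca T a b w ->
  exists i j, lowest_pair T p i j.
Proof.
elim=> [|N IH] a b w Hs Hab Ha Hb Hw.
  by case: w Hs {Hw}.
case: (classic (exists a' b' w', [/\ a' != b', fractional p a', fractional p b',
   is_lca T a' b' w' & proper_descendant w' w])).
  move=> [a' [b' [w' [H1 H2 H3 H4 [H5 H6]]]]].
  apply: (IH a' b' w') => //.
  by case: (desc_size H5) => // H; rewrite -ltnS; apply: leq_trans H Hs.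
move=> Hno; exists a, b; split=> //; split=> //; split=> //; exists w; split=> //.
move=> a' b' w' H1 H2 H3 H4 H5; apply: Hno; by exists a', b', w'.
Qed.

Lemma lowest_exists (R : realType) n (T : tree n) (p : 'I_n -> R) a b : keyed_tree T ->
  a != b -> fractional p a -> fractional p b -> exists i j, lowest_pair T p i j.
Proof.
move=> HT Hab Ha Hb.
have [w Hw] := lca_exists (keyed_mem a HT) (keyed_mem b HT).
exact: (lowest_exists_aux (leqnn _) Hab Ha Hb Hw).
Qed.

Lemma outcome_exists (R : realType) n (T : tree n) (p : 'I_n -> R) : keyed_tree T ->
  exists D, outcome T p D.
Proof.
move=> HT; move: {2}#|fset_of p| (leqnn #|fset_of p|) => N; elim: N p => [|N IH] p HN.
  eexists; apply: outcome_stop => i j Hij Hi Hj.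
  have Hin : i \in fset_of p by rewrite inE.
  have : (0 < #|fset_of p|)%N by apply/card_gt0P; exists i.
  by rewrite lt0n -leqn0 HN.
case: (classic (exists a b, [/\ a != b, fractional p a & fractional p b])).
  move=> [a [b [Hab Ha Hb]]].
  have [i [j Hl]] := lowest_exists HT Hab Ha Hb.
  have Hl' := Hl; case: Hl' => [Hij [Hi [Hj _]]].
  have [q [a1 [b1 [a2 [b2 [E [_ [_ [_ [_ [_ [_ [_ [_ [_ [H1 [H2 _]]]]]]]]]]]]]]]]] := pa_spec Hi Hj.
  have [D1 HD1] : exists D1, outcome T (pair_aggregate p i j).1.2 D1.
    rewrite E /=; apply: IH; rewrite -ltnS; apply: leq_trans HN.
    exact: fset_decr.
  have [D2 HD2] : exists D2, outcome T (pair_aggregate p i j).2 D2.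
    rewrite E /=; apply: IH; rewrite -ltnS; apply: leq_trans HN.
    exact: fset_decr.
  by eexists; apply: outcome_step Hl HD1 HD2.
move=> Hno; eexists; apply: outcome_stop => i j Hij Hi Hj.
by apply: Hno; exists i, j.
Qed.

Lemma Pr_mix (R : realType) n (q : R) (D1 D2 : {set 'I_n} -> R) E :
  Pr (mix q D1 D2) E = q * Pr D1 E + (1 - q) * Pr D2 E.
Proof. by rewrite /Pr /mix big_split /= -!mulr_sumr. Qed.

Lemma Pr_dirac (R : realType) n (S0 : {set 'I_n}) (E : pred {set 'I_n}) :
  Pr (@dirac R n S0) E = if E S0 then 1 else 0.
Proof.
rewrite /Pr; case: ifP => HE.
  rewrite (bigD1 S0) //= big1 ?addr0 /dirac ?eqxx // => S /andP [_ /negbTE ->] //.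
by rewrite big1 // => S HS; rewrite /dirac; case: eqVneq => // E'; subst; rewrite HS in HE.
Qed.

Lemma sum_dirac (R : realType) n (S0 : {set 'I_n}) : \sum_S (@dirac R n S0 S) = 1.
Proof. by have := Pr_dirac R S0 predT; rewrite /Pr /=. Qed.

Lemma big_in1 (T : Type) (idx : T) (op : Monoid.com_law idx) n (A : {set 'I_n}) i (F : 'I_n -> T) :
  \big[op/idx]_(k in A | k == i) F k = if i \in A then F i else idx.
Proof.
case: ifP => Hi.
  by apply: big_pred1 => k /=; case: (eqVneq k i) => [->|]; rewrite ?Hi ?andbF.
by rewrite big_pred0 // => k /=; case: (eqVneq k i) => [->|]; rewrite ?Hi ?andbF.
Qed.

Lemma big_split2 (T : Type) (idx : T) (op : Monoid.com_law idx) n (A : {set 'I_n}) i j (F : 'I_n -> T) :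
  i != j ->
  \big[op/idx]_(k in A) F k =
  op (op (\big[op/idx]_(k in A | (k != i) && (k != j)) F k) (if i \in A then F i else idx))
     (if j \in A then F j else idx).
Proof.
move=> Hij.
rewrite (bigID (fun k => k == i)) /= big_in1.
rewrite (bigID (fun k => k == j)) /=.
have -> : \big[op/idx]_(i0 < n | (i0 \in A) && (i0 != i) && (i0 == j)) F i0 = if j \in A then F j else idx.
  rewrite -(big_in1 op); apply: eq_bigl => k; case: (eqVneq k j) => [->|]; rewrite ?andbF ?andbT //.
  by rewrite eq_sym Hij andbT.
have -> : \big[op/idx]_(i0 < n | (i0 \in A) && (i0 != i) && (i0 != j)) F i0 =
   \big[op/idx]_(k in A | (k != i) && (k != j)) F k.
  by apply: eq_bigl => k; rewrite andbA.
set X := (if i \in A then _ else _); set Y := (if j \in A then _ else _).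
set Z := \big[op/idx]_(k in A | _) F k.
by rewrite (Monoid.mulmC op Z X) -Monoid.mulmA (Monoid.mulmC op Y Z).
Qed.

Lemma sum_upd (R : realType) n (p : 'I_n -> R) i j a b (A : {set 'I_n}) : i != j ->
  \sum_(k in A) upd p i j a b k =
  \sum_(k in A) p k + (if i \in A then a - p i else 0) + (if j \in A then b - p j else 0).
Proof.
move=> Hij; rewrite (big_split2 _ _ _ Hij) [in RHS](big_split2 _ _ _ Hij) /=.
rewrite (eq_bigr p); last by move=> k /andP [_ /andP [H1 H2]]; rewrite upd_o.
rewrite upd_i upd_j //.
by case: (i \in A); case: (j \in A); rewrite ?addr0 //; lra.
Qed.

Lemma sum_upd_T (R : realType) n (p : 'I_n -> R) i j a b : i != j ->
  a + b = p i + p j -> \sum_k upd p i j a b k = \sum_k p k.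
Proof.
move=> Hij Hab; have := sum_upd p a b [set: 'I_n] Hij.
rewrite !in_setT.
have E : forall F : 'I_n -> R, \sum_(k in [set: 'I_n]) F k = \sum_k F k.
  by move=> F; apply: eq_bigl => k; rewrite in_setT.
rewrite !E => ->; lra.
Qed.

From mathcomp Require Import zify.

Definition in01 (R : realType) n (p : 'I_n -> R) := forall k, 0 <= p k <= 1.
Definition intsum (R : realType) n (p : 'I_n -> R) := exists m : int, \sum_k p k = m%:~R.
Definition stopped (R : realType) n (p : 'I_n -> R) :=
  forall i j, i != j -> fractional p i -> fractional p j -> False.

Lemma stop_binary (R : realType) n (p : 'I_n -> R) : in01 p -> intsum p -> stopped p ->
  forall k, p k = 0 \/ p k = 1.
Proof.
move=> H01 [z Hz] Hst k.
case: (classic (p k = 0 \/ p k = 1)) => // Hk; exfalso.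
have Hfk : fractional p k.
  have := H01 k; rewrite /fractional => /andP [H0 H1].
  have h0 : p k != 0 by apply/eqP => E; apply: Hk; left.
  have h1 : p k != 1 by apply/eqP => E; apply: Hk; right.
  by rewrite !lt_def h0 eq_sym h1 H0 H1.
have Hb : forall l, l != k -> p l = ((p l == 1) : nat)%:R.
  move=> l Hl; case: (eqVneq (p l) 1) => [->//|Hne].
  have := H01 l => /andP [H0 H1].
  case: (eqVneq (p l) 0) => [->//|Hne0].
  exfalso; apply: (Hst l k Hl _ Hfk).
  by rewrite /fractional !lt_def Hne0 eq_sym Hne H0 H1.
move: Hz; rewrite (bigD1 k) //=.
rewrite (eq_bigr (fun l => ((p l == 1) : nat)%:R)); last by move=> l /Hb.
rewrite -natr_sum => E.
set c := (\sum_(i < n | i != k) _)%N in E.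
have E2 : p k = (z - c%:Z)%:~R.
  by rewrite intrB -E /=; lra.
move: Hfk; rewrite /fractional E2 ltr0z ltrz1 => /andP [H1 H2]; lia.
Qed.

Lemma stop_set (R : realType) n (p : 'I_n -> R) : (forall k, p k = 0 \/ p k = 1) ->
  forall k, p k = ((k \in [set i | p i == 1]) : nat)%:R.
Proof. by move=> Hb k; rewrite inE; case: (Hb k) => ->; rewrite ?eqxx // eq_sym oner_eq0. Qed.

Lemma in01_upd (R : realType) n (p : 'I_n -> R) i j a b :
  in01 p -> 0 <= a <= 1 -> 0 <= b <= 1 -> in01 (upd p i j a b).
Proof. by move=> H Ha Hb k; rewrite /upd; case: ifP => _ //; case: ifP. Qed.

Lemma intsum_upd (R : realType) n (p : 'I_n -> R) i j a b :
  i != j -> a + b = p i + p j -> intsum p -> intsum (upd p i j a b).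
Proof. by move=> Hij Hab [z Hz]; exists z; rewrite sum_upd_T. Qed.

Lemma outcome_ind2 (R : realType) n (T : tree n)
  (P : ('I_n -> R) -> ({set 'I_n} -> R) -> Prop) :
  (forall p, in01 p -> intsum p -> stopped p -> P p (@dirac R n [set i | p i == 1])) ->
  (forall p i j q a1 b1 a2 b2 D1 D2, in01 p -> intsum p -> lowest_pair T p i j ->
     0 < q < 1 ->
     a1 + b1 = p i + p j -> a2 + b2 = p i + p j ->
     q * a1 + (1 - q) * a2 = p i -> q * b1 + (1 - q) * b2 = p j ->
     0 <= a1 <= 1 -> 0 <= b1 <= 1 -> 0 <= a2 <= 1 -> 0 <= b2 <= 1 ->
     q * (a1 * b1) + (1 - q) * (a2 * b2) <= p i * p j ->
     q * ((1 - a1) * (1 - b1)) + (1 - q) * ((1 - a2) * (1 - b2)) <= (1 - p i) * (1 - p j) ->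
     outcome T (upd p i j a1 b1) D1 -> outcome T (upd p i j a2 b2) D2 ->
     P (upd p i j a1 b1) D1 -> P (upd p i j a2 b2) D2 -> P p (mix q D1 D2)) ->
  forall p D, outcome T p D -> in01 p -> intsum p -> P p D.
Proof.
move=> Hs Hst p D HD; elim: HD => {p D} [p Hp|p i j D1 D2 Hl HD1 IH1 HD2 IH2] H01 Hint.
  exact: Hs.
have Hl' := Hl; case: Hl' => [Hij [Hi [Hj _]]].
have [q [a1 [b1 [a2 [b2 [E [Hq [S1 [S2 [M1 [M2 [A1 [B1 [A2 [B2 [_ [_ [P1 P2]]]]]]]]]]]]]]]]]] := pa_spec Hi Hj.
move: HD1 IH1 HD2 IH2; rewrite E /= => HD1 IH1 HD2 IH2.
apply: (Hst p i j q a1 b1 a2 b2) => //.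
  by apply: IH1; [apply: in01_upd | apply: intsum_upd].
by apply: IH2; [apply: in01_upd | apply: intsum_upd].
Qed.

Lemma P_dist (R : realType) n (T : tree n) (p : 'I_n -> R) D :
  outcome T p D -> in01 p -> intsum p -> is_distribution D.
Proof.
apply: (outcome_ind2 (P := fun p D => is_distribution D)).
  move=> {}p _ _ _; split; last exact: sum_dirac.
  by move=> S; rewrite /dirac; case: ifP.
move=> {}p i j q a1 b1 a2 b2 D1 D2 _ _ _ /andP [Hq0 Hq1] _ _ _ _ _ _ _ _ _ _ _ _ [P1 S1] [P2 S2].
split.
  move=> S; rewrite /mix; apply: addr_ge0; apply: mulr_ge0 => //; try lra.
rewrite /mix big_split /= -!mulr_sumr S1 S2; lra.
Qed.

Lemma marg_upd (R : realType) n (p : 'I_n -> R) i j q a1 b1 a2 b2 k : i != j ->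
  q * a1 + (1 - q) * a2 = p i -> q * b1 + (1 - q) * b2 = p j ->
  q * upd p i j a1 b1 k + (1 - q) * upd p i j a2 b2 k = p k.
Proof.
move=> Hij H1 H2.
case: (eqVneq k i) => [->|Hki]; first by rewrite !upd_i.
case: (eqVneq k j) => [->|Hkj]; first by rewrite !upd_j.
rewrite !upd_o //; lra.
Qed.

Lemma P_marg (R : realType) n (T : tree n) (p : 'I_n -> R) D :
  outcome T p D -> in01 p -> intsum p -> forall i, Pr D (fun S => i \in S) = p i.
Proof.
apply: (outcome_ind2 (P := fun p D => forall i, Pr D (fun S => i \in S) = p i)).
  move=> {}p H01 Hint Hst i; rewrite Pr_dirac (stop_set (stop_binary H01 Hint Hst)).
  by case: (i \in _).
move=> {}p i j q a1 b1 a2 b2 D1 D2 _ _ [Hij _] _ _ _ M1 M2 _ _ _ _ _ _ _ _ IH1 IH2 k.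
by rewrite Pr_mix IH1 IH2; apply: marg_upd.
Qed.

Lemma P_card (R : realType) n (T : tree n) (p : 'I_n -> R) D :
  outcome T p D -> in01 p -> intsum p -> forall S, 0 < D S -> (#|S|%:R : R) = \sum_i p i.
Proof.
move=> HD H01 Hint.
have := HD; move: H01 Hint.
have Hd := P_dist HD.
move=> H01 Hint _; move: HD H01 Hint {Hd}.
apply: (outcome_ind2 (P := fun p D => forall S, 0 < D S -> (#|S|%:R : R) = \sum_i p i)).
  move=> {}p H01 Hint Hst S; rewrite /dirac; case: eqVneq => [->|_]; last by rewrite ltxx.
  move=> _; rewrite (eq_bigr _ (fun k _ => stop_set (stop_binary H01 Hint Hst) k)).
  rewrite -natr_sum; congr (_%:R).
  by rewrite -sum1_card big_mkcond.
move=> {}p i j q a1 b1 a2 b2 D1 D2 H01 Hint [Hij _] /andP [Hq0 Hq1] S1 S2 _ _ A1 B1 A2 B2 _ _ HD1 HD2 IH1 IH2 S.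
have [Pd1 _] := P_dist HD1 (@in01_upd R n p i j a1 b1 H01 A1 B1) (intsum_upd Hij S1 Hint).
have [Pd2 _] := P_dist HD2 (@in01_upd R n p i j a2 b2 H01 A2 B2) (intsum_upd Hij S2 Hint).
rewrite /mix => Hpos.
case: (ltrP 0 (D1 S)) => H1.
  by rewrite IH1 // sum_upd_T.
case: (ltrP 0 (D2 S)) => H2.
  by rewrite IH2 // sum_upd_T.
have := Pd1 S; have := Pd2 S => G2 G1.
exfalso; have E1 : D1 S = 0 by lra.
have E2 : D2 S = 0 by lra.
by move: Hpos; rewrite E1 E2 !mulr0 addr0 ltxx.
Qed.

Lemma prod_step (R : realType) n (p : 'I_n -> R) (g : R -> R) i j q a1 b1 a2 b2 (J : {set 'I_n}) :
  i != j -> 0 < q < 1 -> (forall k, 0 <= g (p k)) ->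
  q * g a1 + (1 - q) * g a2 = g (p i) -> q * g b1 + (1 - q) * g b2 = g (p j) ->
  q * (g a1 * g b1) + (1 - q) * (g a2 * g b2) <= g (p i) * g (p j) ->
  q * (\prod_(k in J) g (upd p i j a1 b1 k)) + (1 - q) * (\prod_(k in J) g (upd p i j a2 b2 k))
   <= \prod_(k in J) g (p k).
Proof.
move=> Hij /andP [Hq0 Hq1] Hg Mi Mj Mij.
rewrite !(big_split2 _ _ _ Hij) /= !upd_i !upd_j //.
have E : forall a b, \prod_(k in J | (k != i) && (k != j)) g (upd p i j a b k) =
                     \prod_(k in J | (k != i) && (k != j)) g (p k).
  by move=> a b; apply: eq_bigr => k /andP [_ /andP [H1 H2]]; rewrite upd_o.
rewrite !E; set Z := \prod_(k in J | _) _.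
have HZ : 0 <= Z by apply: prodr_ge0.
case: (i \in J); case: (j \in J); rewrite ?mulr1.
- have := ler_wpM2l HZ Mij; nra.
- rewrite -Mi; nra.
- rewrite -Mj; nra.
- nra.
Qed.

Lemma P_sub (R : realType) n (T : tree n) (p : 'I_n -> R) D :
  outcome T p D -> in01 p -> intsum p -> forall J : {set 'I_n},
  Pr D (fun S => J \subset S) <= \prod_(i in J) p i.
Proof.
move=> HD H01 Hint J; move: HD H01 Hint.
apply: (outcome_ind2 (P := fun p D => Pr D (fun S => J \subset S) <= \prod_(i in J) p i)).
  move=> {}p H01 Hint Hst; rewrite Pr_dirac.
  have Hs := stop_set (stop_binary H01 Hint Hst).
  case: ifP => HJ.
    rewrite big1 // => k Hk; rewrite Hs; by rewrite (subsetP HJ k Hk).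
  apply: prodr_ge0 => k _; by case/andP: (H01 k).
move=> {}p i j q a1 b1 a2 b2 D1 D2 H01 Hint [Hij [Hi [Hj _]]] Hq _ _ M1 M2 A1 B1 A2 B2 P1 _ _ _ IH1 IH2.
rewrite Pr_mix; case/andP: (Hq) => Hq0 Hq1.
apply: le_trans (prod_step (g := id) J Hij Hq _ M1 M2 P1); last by move=> k; case/andP: (H01 k).
apply: lerD; apply: ler_wpM2l => //; lra.
Qed.

Lemma P_disj (R : realType) n (T : tree n) (p : 'I_n -> R) D :
  outcome T p D -> in01 p -> intsum p -> forall J : {set 'I_n},
  Pr D (fun S => [disjoint J & S]) <= \prod_(i in J) (1 - p i).
Proof.
move=> HD H01 Hint J; move: HD H01 Hint.
apply: (outcome_ind2 (P := fun p D => Pr D (fun S => [disjoint J & S]) <= \prod_(i in J) (1 - p i))).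
  move=> {}p H01 Hint Hst; rewrite Pr_dirac.
  have Hs := stop_set (stop_binary H01 Hint Hst).
  case: ifP => HJ.
    rewrite big1 // => k Hk; rewrite Hs.
    by move/disjointFr: HJ => /(_ k Hk) ->; rewrite subr0.
  apply: prodr_ge0 => k _; case/andP: (H01 k); lra.
move=> {}p i j q a1 b1 a2 b2 D1 D2 H01 Hint [Hij [Hi [Hj _]]] Hq _ _ M1 M2 A1 B1 A2 B2 _ P2 _ _ IH1 IH2.
rewrite Pr_mix; case/andP: (Hq) => Hq0 Hq1.
apply: le_trans (prod_step (g := fun x => 1 - x) J Hij Hq _ _ _ P2).
- apply: lerD; apply: ler_wpM2l => //; lra.
- by move=> k; case/andP: (H01 k); lra.
- lra.
- lra.
Qed.

Definition ones (R : realType) n (Rv : {set 'I_n}) (q : 'I_n -> R) := #|[set k in Rv | q k == 1]|.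
Definition frs (R : realType) n (Rv : {set 'I_n}) (q : 'I_n -> R) := #|[set k in Rv | frac01 (q k)]|.
Definition Bst (R : realType) n (Rv : {set 'I_n}) (x : R) (q : 'I_n -> R) :=
  (frs Rv q <= 1)%N /\ Num.floor x <= (ones Rv q)%:Z /\ ((ones Rv q + frs Rv q)%N)%:Z <= Num.ceil x.

Lemma card_change (R : realType) n (P : pred R) (q q' : 'I_n -> R) (Rv : {set 'I_n}) m :
  m \in Rv -> (forall k, k \in Rv -> k != m -> q' k = q k) ->
  (#|[set k in Rv | P (q' k)]| + P (q m) = #|[set k in Rv | P (q k)]| + P (q' m))%N.
Proof.
move=> Hm Hq.
rewrite (cardsD1 m [set k in Rv | P (q' k)]) (cardsD1 m [set k in Rv | P (q k)]) !inE Hm /=.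
have -> : [set k in Rv | P (q' k)] :\ m = [set k in Rv | P (q k)] :\ m.
  apply/setP => k; rewrite !inE; case: (eqVneq k m) => //= Hk.
  by case Hkr: (k \in Rv) => //=; rewrite Hq.
case: (P (q m)); case: (P (q' m)) => /=; lia.
Qed.

Lemma B_step (R : realType) n (Rv : {set 'I_n}) (x : R) (q q' : 'I_n -> R) m :
  m \in Rv -> frac01 (q m) -> (forall k, k \in Rv -> k != m -> q' k = q k) ->
  0 <= q' m <= 1 -> Bst Rv x q -> Bst Rv x q'.
Proof.
move=> Hm Hfm Hq Hq'm [F1 [F2 F3]].
have C1 := card_change (fun y => y == 1) Hm Hq.
have C2 := card_change (fun y : R => frac01 y) Hm Hq.
have Hf1 : (0 < frs Rv q)%N by apply/card_gt0P; exists m; rewrite inE Hm.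
rewrite /= in C1 C2.
have Hqm1 : (q m == 1) = false by move: Hfm; rewrite /frac01 => /andP [_ H]; rewrite lt_eqF.
rewrite Hqm1 Hfm in C1 C2.
rewrite /Bst -/(ones Rv q') -/(frs Rv q') -/(ones Rv q) -/(frs Rv q) in C1 C2 *.
have Hex : ~~ ((q' m == 1) && frac01 (q' m)).
  by apply/negP => /andP [/eqP -> ]; rewrite /frac01 ltxx andbF.
move: Hex C1 C2; case: (q' m == 1); case: (frac01 (q' m)) => //= _ C1 C2; lia.
Qed.

Lemma binary01 (R : realType) (y : R) : 0 <= y <= 1 -> ~~ frac01 y -> y = 0 \/ y = 1.
Proof.
move=> /andP [H0 H1]; rewrite /frac01 negb_and -!leNgt => /orP [H|H]; [left|right]; apply/eqP;
  rewrite eq_le ?H ?H0 ?H1 //.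
Qed.

Lemma sum_binary (R : realType) n (Rv : {set 'I_n}) (q : 'I_n -> R) :
  (forall k, k \in Rv -> q k = 0 \/ q k = 1) -> pmass q Rv = (ones Rv q)%:R.
Proof.
move=> Hb; rewrite /pmass /ones.
rewrite (eq_bigr (fun k => ((q k == 1) : nat)%:R)); last first.
  by move=> k /Hb [->|->]; rewrite ?eqxx // eq_sym oner_eq0.
rewrite -natr_sum; congr (_%:R).
rewrite -sum1_card big_mkcond [RHS]big_mkcond /=; apply: eq_bigr => k _.
by rewrite inE; case: (k \in Rv); case: (q k == 1).
Qed.

Lemma A_to_B (R : realType) n (Rv : {set 'I_n}) (q : 'I_n -> R) m :
  (forall k, 0 <= q k <= 1) -> m \in Rv -> frac01 (q m) ->
  (forall a b, a != b -> a \in Rv -> b \in Rv -> frac01 (q a) -> frac01 (q b) -> False) ->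
  Bst Rv (pmass q Rv) q.
Proof.
move=> H01 Hm Hfm Hno.
have Hoth : forall k, k \in Rv -> k != m -> ~~ frac01 (q k).
  by move=> k Hk Hkm; apply/negP => Hfk; apply: (Hno k m).
have Hfr : frs Rv q = 1%N.
  apply/eqP; rewrite eqn_leq; apply/andP; split.
    rewrite leqNgt; apply/negP => /card_gt1P [a [b [Ha Hb Hab]]].
    by move: Ha Hb; rewrite !inE => /andP [Ha Ha'] /andP [Hb Hb']; apply: (Hno a b).
  by apply/card_gt0P; exists m; rewrite inE Hm.
set q0 := fun k => if k == m then 0 else q k.
have Hb : forall k, k \in Rv -> q0 k = 0 \/ q0 k = 1.
  move=> k Hk; rewrite /q0; case: eqVneq => [_|Hkm]; first by left.
  exact: binary01 (H01 k) (Hoth k Hk Hkm).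
have Hones : ones Rv q0 = ones Rv q.
  have Hq0 : forall k, k \in Rv -> k != m -> q0 k = q k by move=> k _ Hkm; rewrite /q0 (negbTE Hkm).
  have C := card_change (fun y => y == 1) Hm Hq0.
  have Hqm1 : (q m == 1) = false by move: Hfm; rewrite /frac01 => /andP [_ H]; rewrite lt_eqF.
  move: C; rewrite /= Hqm1 /q0 eqxx eq_sym oner_eq0 /ones !addn0; exact.
have Hsum : pmass q Rv = (ones Rv q)%:R + q m.
  rewrite -Hones -sum_binary // /pmass (bigD1 m) //= [in RHS](bigD1 m) //= /q0 eqxx add0r addrC.
  by congr (_ + _); apply: eq_bigr => k /andP [_ /negbTE ->].
move: Hfm; rewrite /frac01 => /andP [Hm0 Hm1].
rewrite /Bst Hfr; split=> //.
rewrite (@floor_def _ _ (ones Rv q)%:Z); last by rewrite Hsum /=; apply/andP; split; rewrite ?intrD /=; lra.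
rewrite (@ceil_def _ _ (ones Rv q + 1)%:Z); last first.
  by rewrite Hsum PoszD intrD addrK /=; apply/andP; split; lra.
by split.
Qed.

Lemma no_two_frac (R : realType) n (T u v : tree n) (q : 'I_n -> R) m o :
  keyed_tree T -> descendant u T ->
  (forall a b w, a != b -> fractional q a -> fractional q b -> is_lca T a b w -> ~ proper_descendant w u) ->
  descendant v T -> m \in leaves u -> o \in leaves u -> m \in leaves v -> o \notin leaves v ->
  forall a b, a != b -> a \in range_of v -> b \in range_of v -> frac01 (q a) -> frac01 (q b) -> False.
Proof.
move=> HT HuT Hmin HvT Hmu Hou Hmv Hov a b Hab; rewrite !inE => Ha Hb Hfa Hfb.
have Hu := keyed_uniq HT.
have [w Hw] := lca_exists (keyed_mem a HT) (keyed_mem b HT).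
have Hwv := lca_below Hu Hw HvT Ha Hb.
case: (desc_comparable Hu HuT HvT Hmu Hmv) => Huv.
  by move: Hov; rewrite (leaves_desc Huv Hou).
apply: (Hmin a b w Hab Hfa Hfb Hw); split; first exact: desc_trans Hwv Huv.
move=> E; subst w.
by move: Hov; rewrite (leaves_desc Hwv Hou).
Qed.

Definition Inv (R : realType) n (Rv : {set 'I_n}) (x : R) (q : 'I_n -> R) :=
  pmass q Rv = x \/ Bst Rv x q.

Lemma Inv_step (R : realType) n (T v : tree n) (q : 'I_n -> R) i j a b (x : R) :
  keyed_tree T -> descendant v T -> lowest_pair T q i j -> in01 q ->
  0 <= a <= 1 -> 0 <= b <= 1 -> a + b = q i + q j ->
  Inv (range_of v) x q -> Inv (range_of v) x (upd q i j a b).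
Proof.
move=> HT HvT [Hij [Hi [Hj [u [Hu Hmin]]]]] H01 Ha Hb Hab.
set Rv := range_of v.
have Hsum := sum_upd q a b Rv Hij.
have HuT : descendant u T by case: Hu.
have Hiu : i \in leaves u by case: Hu => _ [].
have Hju : j \in leaves u by case: Hu => _ [_ []].
have One : forall m o c, m \in Rv -> o \notin Rv -> frac01 (q m) -> o \in leaves u -> m \in leaves u ->
   0 <= c <= 1 -> (forall k, k \in Rv -> k != m -> upd q i j a b k = q k) -> upd q i j a b m = c ->
   Inv Rv x q -> Inv Rv x (upd q i j a b).
  move=> m o c Hm Ho Hfm Hou Hmu Hc Hoth Hupm [HA|HB]; right.
  - apply: (B_step Hm Hfm Hoth); first by rewrite Hupm.
    rewrite -HA; apply: (A_to_B H01 Hm Hfm).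
    move=> a' b' Hab'.
    have Hmv : m \in leaves v by move: Hm; rewrite inE.
    have Hov : o \notin leaves v by move: Ho; rewrite inE.
    exact: (no_two_frac HT HuT Hmin HvT Hmu Hou Hmv Hov Hab').
  - by apply: (B_step Hm Hfm Hoth); rewrite ?Hupm.
case Hir: (i \in Rv); case Hjr: (j \in Rv).
- case=> [HA|[F1 _]]; first by left; rewrite /pmass Hsum ?Hir ?Hjr -/(pmass q Rv) HA; lra.
  exfalso; have : (1 < frs Rv q)%N.
    apply/card_gt1P; exists i, j; split=> //; rewrite in_set.
      by rewrite Hir.
    by rewrite Hjr.
  by rewrite ltnNge F1.
- apply: (One i j a) => //; first by rewrite Hjr.
    by move=> k Hk Hki; rewrite upd_o // ; apply/negP => /eqP E; subst k; rewrite Hjr in Hk.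
    by rewrite upd_i.
- apply: (One j i b) => //; first by rewrite Hir.
    move=> k Hk Hkj; rewrite upd_o //; apply/negP => /eqP E; subst k; by rewrite Hir in Hk.
    by rewrite upd_j.
- have Hagree : forall k, k \in Rv -> upd q i j a b k = q k.
    move=> k Hk; rewrite upd_o //; apply/negP => /eqP E; subst k; by rewrite ?Hir ?Hjr in Hk.
  have Eo : ones Rv (upd q i j a b) = ones Rv q.
    by apply: eq_card => k; rewrite !inE; case Hk: (k \in leaves v) => //=; rewrite Hagree // inE Hk.
  have Ef : frs Rv (upd q i j a b) = frs Rv q.
    by apply: eq_card => k; rewrite !inE; case Hk: (k \in leaves v) => //=; rewrite Hagree // inE Hk.
  case=> [HA|HB]; [left|right].
    by rewrite /pmass Hsum ?Hir ?Hjr -/(pmass q Rv) HA !addr0.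
  by rewrite /Bst Eo Ef.
Qed.

Lemma ceil_le_floor1 (R : realType) (x : R) : Num.ceil x <= Num.floor x + 1.
Proof.
have H : ((Num.ceil x - 1)%:~R : R) < (Num.floor x + 1)%:~R.
  exact: lt_le_trans (ceilB1_lt x) (ltW (floorD1_gt x)).
rewrite ltr_int in H; lia.
Qed.

Lemma P_range (R : realType) n (T v : tree n) (p : 'I_n -> R) D (x : R) :
  keyed_tree T -> descendant v T ->
  outcome T p D -> in01 p -> intsum p -> Inv (range_of v) x p ->
  forall S, 0 < D S ->
  (#|S :&: range_of v|%:Z = Num.floor x \/ #|S :&: range_of v|%:Z = Num.ceil x).
Proof.
move=> HT HvT HD H01 Hint; move: HD H01 Hint.
apply: (outcome_ind2 (P := fun q D => Inv (range_of v) x q -> forall S, 0 < D S ->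
  (#|S :&: range_of v|%:Z = Num.floor x \/ #|S :&: range_of v|%:Z = Num.ceil x))).
  move=> q H01 Hint Hst HI S; rewrite /dirac; case: eqVneq => [->|_]; last by rewrite ltxx.
  move=> _.
  have Hb := stop_binary H01 Hint Hst.
  have -> : [set i | q i == 1] :&: range_of v = [set k in range_of v | q k == 1].
    by apply/setP => k; rewrite !inE andbC.
  rewrite -/(ones (range_of v) q).
  case: HI => [HA|[F1 [F2 F3]]].
    left; rewrite -HA sum_binary; last by move=> k _; exact: Hb k.
    by apply/esym/floor_def; rewrite /= intrD /=; apply/andP; split; lra.
  have := ceil_le_floor1 x; lia.
move=> q i j qq a1 b1 a2 b2 D1 D2 H01 Hint Hl /andP [Hq0 Hq1] S1 S2 _ _ A1 B1 A2 B2 _ _ HD1 HD2 IH1 IH2 HI S.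
have [Hij _] := Hl.
have [Pd1 _] := P_dist HD1 (@in01_upd R n q i j a1 b1 H01 A1 B1) (intsum_upd Hij S1 Hint).
have [Pd2 _] := P_dist HD2 (@in01_upd R n q i j a2 b2 H01 A2 B2) (intsum_upd Hij S2 Hint).
rewrite /mix => Hpos.
case: (ltrP 0 (D1 S)) => H1.
  by apply: IH1 => //; apply: (Inv_step HT HvT Hl).
case: (ltrP 0 (D2 S)) => H2.
  by apply: IH2 => //; apply: (Inv_step HT HvT Hl).
have := Pd1 S; have := Pd2 S => G2 G1.
exfalso; have E1 : D1 S = 0 by lra.
have E2 : D2 S = 0 by lra.
by move: Hpos; rewrite E1 E2 !mulr0 addr0 ltxx.
Qed.

Lemma bigmax_seq_lt1 (R : realType) (A : Type) (l : seq A) (F : A -> R) :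
  (forall v, List.In v l -> F v < 1) -> \big[Num.max/0]_(v <- l) F v < 1.
Proof.
elim: l => [|a l IH] H; first by rewrite big_nil ltr01.
rewrite big_cons gt_max H /=; last by left.
by apply: IH => v Hv; apply: H; right.
Qed.

Lemma bigmax_lt1 (R : realType) n (P : pred {set 'I_n}) (F : {set 'I_n} -> R) :
  (forall S, P S -> F S < 1) -> \big[Num.max/0]_(S | P S) F S < 1.
Proof.
move=> H; apply: (big_ind (fun y : R => y < 1)); [exact: ltr01| |exact: H].
by move=> y z Hy Hz; rewrite gt_max Hy Hz.
Qed.

Lemma discrepancy_lt1 (R : realType) (x : R) (k : int) :
  k = Num.floor x \/ k = Num.ceil x -> `|(k%:~R : R) - x| < 1.
Proof.
case=> ->.
  have H1 := floor_le x; have H2 := floorD1_gt x.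
  rewrite intrD /= in H2; rewrite ltr_norml; apply/andP; split; lra.
have H1 := ceil_ge x; have H2 := ceilB1_lt x.
rewrite intrD /= in H2; rewrite ltr_norml; apply/andP; split; lra.
Qed.

Unset Implicit Arguments.
Unset Strict Implicit.

Theorem mainTheorem2 (R : realType) (n : nat) (T : tree n) (p : 'I_n -> R) :
  keyed_tree T ->
  (forall i, 0 <= p i <= 1) ->
  (exists m : int, \sum_i p i = m%:~R) ->
  (exists D, outcome T p D) /\
  (forall D, outcome T p D ->
     VarOpt p D /\
     (forall v, descendant v T -> forall S, 0 < D S ->
        let k := (#|S :&: range_of v|%:Z) in
        k = Num.floor (pmass p (range_of v)) \/ k = Num.ceil (pmass p (range_of v))) /\
     max_range_discrepancy T p D < 1).
Proof.
move=> HT H01 Hint; split; first exact: outcome_exists.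
move=> D HD.
have Hr : forall v, descendant v T -> forall S, 0 < D S ->
  (#|S :&: range_of v|%:Z = Num.floor (pmass p (range_of v)) \/
   #|S :&: range_of v|%:Z = Num.ceil (pmass p (range_of v))).
  by move=> v HvT; apply: (P_range HT HvT HD H01 Hint); left.
split; [|split].
- split; first exact: (P_dist HD H01 Hint).
  split; first exact: (P_marg HD H01 Hint).
  split; first exact: (P_card HD H01 Hint).
  split; first exact: (P_sub HD H01 Hint).
  exact: (P_disj HD H01 Hint).
- by move=> v HvT S HS /=; apply: Hr.
- rewrite /max_range_discrepancy; apply: bigmax_lt1 => S HS.
  apply: bigmax_seq_lt1 => v Hv.
  exact: (discrepancy_lt1 (Hr v Hv S HS)).
Qed.
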